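(* Let $\mathcal{H}$ be a finite-dimensional complex Hilbert space and $A,B$ linear operators on $\mathcal{H}$ with $\|A\|\le1$, $\|B\|\le1$ (operator norms), such that $1$ is an eigenvalue of $A$ and of $B$ and there is a nonzero $\rho_1\in\mathcal{H}$ with $A^*\rho_1=\rho_1$ and $B^*\rho_1=\rho_1$. Let $0<p,q<1$, $p+q=1$, and $\mathcal{L}=qA+pB$. If $\lambda=1$ is the only eigenvalue of $B$ with $|\lambda|=1$, then $\lambda=1$ is also the only eigenvalue of $\mathcal{L}$ with $|\lambda|=1$. *)

(* Defs.v *)
(* H = C^n with C = R[i], R : realType (complex numbers). *)
From mathcomp Require Import all_boot all_algebra.
From mathcomp Require Import complex.
From mathcomp Require Import reals.
Set Implicit Arguments. Unset Strict Implicit. Unset Printing Implicit Defensive.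
Import GRing.Theory Num.Theory.
Local Open Scope ring_scope.

Definition hnorm2 (R : realType) (n : nat) (v : 'cV[R[i]]_n) : R[i] :=
  \sum_(k < n) `|v k 0| ^+ 2.

Definition opnorm_le1 (R : realType) (n : nat) (A : 'M[R[i]]_n) : Prop :=
  forall v : 'cV[R[i]]_n, hnorm2 (A *m v) <= hnorm2 v.

Definition adjmx (R : realType) (n : nat) (A : 'M[R[i]]_n) : 'M[R[i]]_n :=
  map_mx (@conjc R) A^T.

Definition is_eigenvalue (R : realType) (n : nat) (A : 'M[R[i]]_n) (lam : R[i]) : Prop :=
  exists2 v : 'cV[R[i]]_n, v != 0 & A *m v = lam *: v.

(* Main.v *)
Require Import Defs.
From mathcomp Require Import all_boot all_algebra.
From mathcomp Require Import complex.
From mathcomp Require Import reals.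
From mathcomp Require Import ring.
From mathcomp Require Import order.
Import Order.Theory GRing.Theory Num.Theory.
Local Open Scope ring_scope.

Lemma qp1 (R : realType) (p q : R) (hpq : p + q = 1) : q%:C%C + p%:C%C = 1 :> R[i].
Proof.
idtac.
have h : real_complex R (q + p) = 1 by rewrite addrC hpq.
have rD : forall u w : R, real_complex R (u + w) = real_complex R u + real_complex R w.
  by move=> u w; exact: rmorphD.
by rewrite -rD.
Qed.

Lemma pt_ident (R : realType) (p q : R) (x y : R[i]) : p + q = 1 ->
  `|q%:C%C * x + p%:C%C * y| ^+ 2 =
  q%:C%C * `|x| ^+ 2 + p%:C%C * `|y| ^+ 2 - q%:C%C * p%:C%C * `|x - y| ^+ 2.
Proof.
move=> hpq.
have cq : Num.conj q%:C%C = q%:C%C.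
  apply: conj_Creal; apply/complex_realP; by exists q.
have cp : Num.conj p%:C%C = p%:C%C.
  apply: conj_Creal; apply/complex_realP; by exists p.
have cD : forall u w : R[i], Num.conj (u + w) = Num.conj u + Num.conj w.
  by move=> u w; exact: rmorphD.
have cB : forall u w : R[i], Num.conj (u - w) = Num.conj u - Num.conj w.
  by move=> u w; exact: rmorphB.
have cM : forall u w : R[i], Num.conj (u * w) = Num.conj u * Num.conj w.
  by move=> u w; exact: rmorphM.
have cN : forall u : R[i], Num.conj (- u) = - Num.conj u.
  by move=> u; exact: rmorphN.
rewrite !normCK !cD ?cN !cM cq cp.
have -> : p%:C%C = 1 - q%:C%C :> R[i].
  by rewrite -(@qp1 _ _ _ hpq) addrAC subrr add0r.
ring.
Qed.

Lemma hnorm2_ge0 (R : realType) n (v : 'cV[R[i]]_n) : 0 <= hnorm2 v.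
Proof. by apply: sumr_ge0 => k _; rewrite exprn_ge0. Qed.

Lemma hnorm2_eq0 (R : realType) n (v : 'cV[R[i]]_n) : hnorm2 v = 0 -> v = 0.
Proof.
move=> /eqP; rewrite /hnorm2 psumr_eq0 => [/allP H|k _]; last by rewrite exprn_ge0.
apply/matrixP => k j; rewrite (ord1 j) mxE.
have := H k (mem_index_enum _); rewrite /= sqrf_eq0 normr_eq0 => /eqP ->//.
Qed.

Theorem mainTheorem4 (R : realType) (n : nat) (A B : 'M[R[i]]_n) (p q : R)
  (hA : opnorm_le1 A) (hB : opnorm_le1 B)
  (hA1 : is_eigenvalue A 1) (hB1 : is_eigenvalue B 1)
  (rho1 : 'cV[R[i]]_n) (hrho : rho1 != 0)
  (hArho : adjmx A *m rho1 = rho1) (hBrho : adjmx B *m rho1 = rho1)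
  (hp0 : 0 < p) (hp1 : p < 1) (hq0 : 0 < q) (hq1 : q < 1) (hpq : p + q = 1)
  (hBper : forall lam : R[i], is_eigenvalue B lam -> `|lam| = 1 -> lam = 1) :
  forall lam : R[i],
    is_eigenvalue ((q%:C)%C *: A + (p%:C)%C *: B) lam -> `|lam| = 1 -> lam = 1.
Proof.
move=> lam [v v0 hv] hl.
set a := A *m v; set b := B *m v.
have hLv : q%:C%C *: a + p%:C%C *: b = lam *: v.
  by rewrite -hv mulmxDl -!scalemxAl.
have e1 : hnorm2 (lam *: v) = hnorm2 v.
  by apply: eq_bigr => k _; rewrite mxE normrM exprMn hl expr1n mul1r.
have e2 : hnorm2 (q%:C%C *: a + p%:C%C *: b) =
   q%:C%C * hnorm2 a + p%:C%C * hnorm2 b - q%:C%C * p%:C%C * hnorm2 (a - b).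
  rewrite /hnorm2 !mulr_sumr -big_split -sumrB /=; apply: eq_bigr => k _.
  by rewrite !mxE pt_ident.
have qC : 0 < q%:C%C :> R[i] by rewrite ltcR.
have pC : 0 < p%:C%C :> R[i] by rewrite ltcR.
have hab : a = b.
  apply/eqP; rewrite -subr_eq0; apply/eqP/hnorm2_eq0.
  have Ha := hA v; have Hb := hB v.
  have : q%:C%C * p%:C%C * hnorm2 (a - b) <= 0.
    have : q%:C%C * hnorm2 a + p%:C%C * hnorm2 b <= q%:C%C * hnorm2 v + p%:C%C * hnorm2 v.
      by apply: lerD; rewrite ler_pM2l.
    rewrite -mulrDl (@qp1 _ _ _ hpq) mul1r.
    rewrite -e1 -hLv e2 => H.
    by move: H; rewrite -subr_ge0 addrAC subrr add0r oppr_ge0.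
  rewrite pmulr_rle0 ?mulr_gt0 // => H.
  by apply/eqP; rewrite eq_le H hnorm2_ge0.
apply: hBper hl; exists v => //.
change (b = lam *: v).
clearbody a b; subst b.
by rewrite -hLv -scalerDl (@qp1 _ _ _ hpq) scale1r.
Qed.
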